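(* Let $G$ be a regular simple graph on $n$ vertices that is isomorphic neither to the empty graph $E_n$ (no edges) nor to the complete graph $K_n$. Then for every integer $k$ with $2\le k\le n-2$, the token graph $F_k(G)$ is non-regular.
   Context: For a simple graph $G=(V,E)$ on $n$ vertices and an integer $1\le k<n$, the $k$-token graph $F_k(G)$ is the graph whose vertices are all $k$-element subsets of $V$, two such subsets $A,B$ being adjacent whenever their symmetric difference $A\triangle B$ is a pair $\{a,b\}$ with $a$ adjacent to $b$ in $G$. *)

(* Defs.v *)
From mathcomp Require Import all_boot.
Set Implicit Arguments. Unset Strict Implicit. Unset Printing Implicit Defensive.

Definition simple_graph (T : finType) (e : rel T) : Prop :=
  symmetric e /\ irreflexive e.

Definition nbhd (T : finType) (e : rel T) (x : T) : {set T} := [set y | e x y].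
Definition regular (T : finType) (e : rel T) : Prop :=
  exists d : nat, forall x : T, #|nbhd e x| = d.

Definition is_empty_graph (T : finType) (e : rel T) : Prop :=
  forall x y : T, ~~ e x y.
Definition is_complete_graph (T : finType) (e : rel T) : Prop :=
  forall x y : T, x != y -> e x y.

Definition symdiff (T : finType) (A B : {set T}) : {set T} :=
  (A :\: B) :|: (B :\: A).

Definition token_adj (T : finType) (e : rel T) (A B : {set T}) : bool :=
  [exists a : T, exists b : T, e a b && (symdiff A B == [set a; b])].

Definition token_vertices (T : finType) (k : nat) : {set {set T}} :=
  [set A : {set T} | #|A| == k].

Definition token_deg (T : finType) (e : rel T) (k : nat) (A : {set T}) : nat :=
  #|[set B in token_vertices T k | token_adj e A B]|.

Definition token_regular (T : finType) (e : rel T) (k : nat) : Prop :=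
  exists d : nat, forall A : {set T}, A \in token_vertices T k -> token_deg e k A = d.

(* Main.v *)
Require Import Defs.
From mathcomp Require Import all_boot.
From mathcomp Require Import zify.
Set Implicit Arguments. Unset Strict Implicit.

Section Aux.
Variables (T : finType) (e : rel T).

Lemma subset_size (S : {set T}) m : m <= #|S| ->
  exists D : {set T}, D \subset S /\ #|D| = m.
Proof.
elim: m => [|m IH] Hm.
  by exists set0; rewrite sub0set cards0.
have [D [HDS HD]] := IH (ltnW Hm).
have : 0 < #|S :\: D|.
  have := cardsID D S; have := subset_leq_card (subsetIr S D).
  rewrite (setIidPr HDS); lia.
rewrite card_gt0 => /set0Pn [x]; rewrite inE => /andP [HxD HxS].
exists (x |: D); split.
  by rewrite subUset sub1set HxS HDS.
by rewrite cardsU1 HxD HD.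
Qed.

Definition Pairs (A : {set T}) : {set T * T} :=
  [set p : T * T | [&& p.1 \in A, p.2 \notin A & e p.1 p.2]].

Lemma nbhd_sum x : #|nbhd e x| = \sum_b (e x b : nat).
Proof.
rewrite -sum1_card big_mkcond /=; apply: eq_bigr => y _.
by rewrite /nbhd inE; case: (e x y).
Qed.

Lemma Pairs_sum A :
  #|Pairs A| = \sum_(a in A) \sum_(b in ~: A) (e a b : nat).
Proof.
rewrite -sum1_card big_mkcond /=.
transitivity (\sum_a \sum_b (if (a, b) \in Pairs A then 1 else 0)).
  by rewrite pair_big /=; apply: eq_bigr => -[a b] _.
rewrite [RHS]big_mkcond /=; apply: eq_bigr => a _.
case Ha: (a \in A).
  rewrite [RHS]big_mkcond /=; apply: eq_bigr => b _.
  by rewrite /Pairs !inE /= Ha; case: (b \in A); case: (e a b).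
by rewrite big1 // => b _; rewrite /Pairs inE /= Ha.
Qed.

Hypothesis Hs : simple_graph e.

Lemma token_deg_pairs k (A : {set T}) : #|A| = k -> token_deg e k A = #|Pairs A|.
Proof.
move=> HA; rewrite /token_deg.
have [esym eirr] := Hs.
have -> : [set B in token_vertices T k | token_adj e A B] =
  [set (A :\ p.1) :|: [set p.2] | p in Pairs A].
  apply/setP => B; apply/idP/idP.
  - rewrite !inE => /andP [HBk /existsP [a /existsP [b /andP [Hab /eqP Hsd]]]].
    have Hne : a != b by apply/eqP => E; move: Hab; rewrite E eirr.
    have Hsdc : #|symdiff A B| = 2 by rewrite Hsd cards2 Hne.
    have Hdisj : (A :\: B) :&: (B :\: A) = set0.
      apply/setP => z; rewrite !inE; by case: (z \in A); case: (z \in B).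
    move: Hsdc; rewrite /symdiff cardsU Hdisj cards0 subn0 => Hsum.
    have H1 := cardsID B A; have H2 := cardsID A B.
    rewrite setIC (eqP HBk) in H2; rewrite HA in H1.
    have HAB : #|A :\: B| = 1 by lia.
    have HBA : #|B :\: A| = 1 by lia.
    have [a' Ha'] := cards1P (introT eqP HAB). have [b' Hb'] := cards1P (introT eqP HBA).
    have Ha'A : a' \in A by have := set11 a'; rewrite -Ha' inE => /andP [].
    have Ha'B : a' \notin B by have := set11 a'; rewrite -Ha' inE => /andP [].
    have Hb'B : b' \in B by have := set11 b'; rewrite -Hb' inE => /andP [].
    have Hb'A : b' \notin A by have := set11 b'; rewrite -Hb' inE => /andP [].
    have Hin : forall z, (z \in symdiff A B) = (z == a') || (z == b').
      by move=> z; rewrite /symdiff inE Ha' Hb' !inE.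
    have Ea' : (a' == a) || (a' == b).
      by have := Hin a'; rewrite Hsd !inE eqxx /= => ->.
    have Eb' : (b' == a) || (b' == b).
      by have := Hin b'; rewrite Hsd !inE eqxx orbT /= => ->.
    have Hnab : a' != b' by apply/eqP => E; move: Ha'A; rewrite E (negbTE Hb'A).
    have He' : e a' b'.
      move: Ea' Eb' Hnab; case/orP => /eqP ->; case/orP => /eqP ->;
        rewrite ?eqxx // => _; by rewrite esym.
    apply/imsetP; exists (a', b'); first by rewrite /Pairs inE /= Ha'A Hb'A He'.
    apply/setP => z /=; rewrite !inE.
    case HzA: (z \in A).
    + have Hzb : (z == b') = false.
        by apply/eqP => E; move: HzA; rewrite E (negbTE Hb'A).
      move: (Ha') => /setP /(_ z); rewrite !inE HzA andbT Hzb orbF => <-.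
      by rewrite negbK andbT.
    + move: (Hb') => /setP /(_ z); rewrite !inE HzA /= => Hz. by rewrite andbF Hz.
  - case/imsetP => [[a b]]; rewrite /Pairs => /[!inE] /= /and3P [HaA HbA Hab] ->.
    have Hne : a != b by apply/eqP => E; move: HaA; rewrite E (negbTE HbA).
    apply/andP; split.
      rewrite setUC cardsU1 !inE negb_and negbK HbA orbT /=.
      by have := cardsD1 a A; rewrite HaA HA; lia.
    apply/existsP; exists a; apply/existsP; exists b; rewrite Hab /=.
    apply/eqP/setP => z; rewrite /symdiff !inE.
    case: (eqVneq z a) => [->|Hza]; first by rewrite HaA (negbTE Hne).
    case: (eqVneq z b) => [->|Hzb]; first by rewrite (negbTE HbA).
    by case: (z \in A).
rewrite card_in_imset //.
move=> [a b] [a' b']; rewrite /Pairs !inE /= => /and3P [HaA HbA _] /and3P [Ha'A Hb'A _] E.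
have Hb : b \in A :\ a' :|: [set b'] by rewrite -E !inE eqxx orbT.
move: Hb; rewrite !inE (negbTE HbA) andbF /= => /eqP Ebb.
have Ha : a \notin A :\ a :|: [set b].
  by rewrite !inE eqxx /=; apply/eqP => Eab; move: HaA; rewrite Eab (negbTE HbA).
rewrite E !inE HaA andbT negb_or in Ha.
by case/andP: Ha; rewrite negbK => /eqP -> _; rewrite Ebb.
Qed.

Definition N x (C : {set T}) := \sum_(c in C) (e x c : nat).

Lemma pairs_add d (C : {set T}) x : (forall y, \sum_b (e y b : nat) = d) -> x \notin C ->
  #|Pairs (x |: C)| + 2 * N x C =
  d + \sum_(a in C) \sum_(b in ~: C) (e a b : nat).
Proof.
move=> Hd HxC.
have [esym eirr] := Hs.
have F1 : forall a, \sum_(b in ~: C) (e a b : nat) =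
    (e a x : nat) + \sum_(b in ~: (x |: C)) (e a b : nat).
  move=> a; rewrite (bigD1 x) /=; last by rewrite inE.
  congr (_ + _); apply: eq_bigl => b; rewrite !inE negb_or andbC.
  by case: (b \in C); rewrite ?andbF ?andbT.
have F2 : forall a, d = N a C + \sum_(b in ~: C) (e a b : nat).
  move=> a; rewrite -(Hd a) (bigID (fun b => b \in C)) /=.
  by congr (_ + _); apply: eq_bigl => b; rewrite inE.
rewrite Pairs_sum big_setU1 //=.
have Fx := F1 x; rewrite eirr add0n in Fx.
have Fd := F2 x.
have FQ : \sum_(a in C) \sum_(b in ~: C) (e a b : nat) =
   N x C + \sum_(a in C) \sum_(b in ~: (x |: C)) (e a b : nat).
  rewrite /N -big_split /=; apply: eq_bigr => a _.
  by rewrite F1 esym.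
lia.
Qed.

End Aux.

Theorem theorem3 (T : finType) (e : rel T) :
  simple_graph e -> regular e ->
  ~ is_empty_graph e -> ~ is_complete_graph e ->
  forall k : nat, 2 <= k -> k <= #|T| - 2 ->
  ~ token_regular e k.
Proof.
move=> Hs [d Hd] Hne Hnc k Hk2 Hkn [K HK].
have [esym eirr] := Hs.
have Hd' : forall y, \sum_b (e y b : nat) = d by move=> y; rewrite -nbhd_sum.
have key : forall (C : {set T}) x y, #|C| = k.-1 -> x \notin C -> y \notin C ->
    N e x C = N e y C.
  move=> C x y HC HxC HyC.
  have Hx := pairs_add Hs Hd' HxC; have Hy := pairs_add Hs Hd' HyC.
  have cx : #|x |: C| = k by rewrite cardsU1 HxC HC; lia.
  have cy : #|y |: C| = k by rewrite cardsU1 HyC HC; lia.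
  have := HK (x |: C); rewrite inE cx eqxx => /(_ isT).
  have := HK (y |: C); rewrite inE cy eqxx => /(_ isT).
  rewrite !token_deg_pairs // => E1 E2.
  lia.
have [u [w [Huw Hnuw]]] : exists u w, u != w /\ ~~ e u w.
  case: (boolP [exists u, exists w, (u != w) && ~~ e u w]).
    by case/existsP => u /existsP [w /andP [H1 H2]]; exists u, w.
  move=> H; exfalso; apply: Hnc => x y Hxy.
  move/existsPn: H => /(_ x) /existsPn /(_ y); rewrite Hxy /= negbK //.
have Hd1 : 0 < d.
  case: (boolP [exists x, exists y, e x y]).
    case/existsP => x /existsP [y Hxy].
    rewrite -(Hd x) card_gt0; apply/set0Pn; exists y; by rewrite inE.
  move=> H; exfalso; apply: Hne => x y.
  by move/existsPn: H => /(_ x) /existsPn /(_ y).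
have [v Hv] : exists v, e u v.
  move: Hd1; rewrite -(Hd u) card_gt0 => /set0Pn [v]; rewrite inE => H.
  by exists v.
have Huv : u != v by apply/eqP => E; move: Hv; rewrite E eirr.
have Hvw : v != w by apply/eqP => E; move: Hv; rewrite E (negbTE Hnuw).
have Hn4 : 4 <= #|T| by lia.
have Hr : forall r, r != v -> r != w -> e v r && ~~ e w r.
  move=> r Hrv Hrw.
  case: (eqVneq r u) => [->|Hru].
    by rewrite esym Hv /= esym.
  have cS : k - 2 <= #|~: [set u; v; w; r]|.
    have H1 := cardsC [set u; v; w; r].
    have H2 : #|[set u; v; w; r]| <= 4.
      rewrite !cardsU !cards1; lia.
    lia.
  have [D [HDS HD]] := subset_size cS.
  have nD : forall z, z \in [set u; v; w; r] -> z \notin D.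
    move=> z Hz; apply/negP => HzD.
    by have := subsetP HDS z HzD; rewrite inE Hz.
  have uD := nD u ltac:(by rewrite !inE eqxx).
  have vD := nD v ltac:(by rewrite !inE eqxx !orbT).
  have wD := nD w ltac:(by rewrite !inE eqxx !orbT).
  have rD := nD r ltac:(by rewrite !inE eqxx !orbT).
  have c1 : #|u |: D| = k.-1 by rewrite cardsU1 uD HD; move: Hk2; clear; lia.
  have c2 : #|r |: D| = k.-1 by rewrite cardsU1 rD HD; move: Hk2; clear; lia.
  have K1 := key (u |: D) v w c1
     ltac:(by rewrite !inE negb_or eq_sym Huv vD)
     ltac:(by rewrite !inE negb_or eq_sym Huw wD).
  have K2 := key (r |: D) v w c2
     ltac:(by rewrite !inE negb_or eq_sym Hrv vD)
     ltac:(by rewrite !inE negb_or eq_sym Hrw wD).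
  rewrite /N !big_setU1 //= in K1 K2.
  rewrite (esym v u) Hv (esym w u) (negbTE Hnuw) in K1.
  move: K1 K2; clear; case: (e v r); case: (e w r) => /=; lia.
have dv : #|T| - 2 <= d.
  rewrite -(Hd v).
  have : ~: [set v; w] \subset nbhd e v.
    apply/subsetP => r; rewrite !inE negb_or => /andP [H1 H2].
    by case/andP: (Hr r H1 H2).
  move/subset_leq_card; have := cardsC [set v; w]; rewrite cards2 Hvw; clear; lia.
have dw : d <= 1.
  rewrite -(Hd w).
  have : nbhd e w \subset [set v].
    apply/subsetP => r; rewrite !inE => Hwr.
    apply/negPn/negP => Hrv.
    case: (eqVneq r w) => [E|Hrw]; first by move: Hwr; rewrite E eirr.
    by case/andP: (Hr r Hrv Hrw) => _; rewrite Hwr.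
  by move/subset_leq_card; rewrite cards1.
move: dv dw Hn4; clear; lia.
Qed.
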